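(* Let $\mathcal{F}$ be a fundamental polygon for a discrete subgroup $\Gamma\leq\mathrm{PSL}_2(\mathbb{R})$ of finite covolume, and let $I,J$ be disjoint, non-empty, open, connected subsegments of $\partial\mathcal{F}$ such that no endpoint of $I$ lies on the same edge of $\mathcal{F}$ as an endpoint of $J$. Then $d_{I,J}>0$.
   Context: A fundamental polygon is an open convex $\mathcal{F}\subset\mathbb{H}$ whose closure is a convex hyperbolic polygon with finitely many geodesic sides, every point of $\mathbb{H}$ $\Gamma$-equivalent to a point of $\overline{\mathcal{F}}$, distinct $\Gamma$-equivalent points of $\overline{\mathcal{F}}$ lying on $\partial\mathcal{F}$; its edges are the maximal geodesic segments of $\partial\mathcal{F}$. Orient $\partial\mathcal{F}$ positively (with $\mathcal{F}$ on the left). Let $z_0\in\overline I$, $z_1\in\overline J$ be the endpoints such that the open arc of $\partial\mathcal{F}$ running positively from $z_1$ to $z_0$ is disjoint from $I\cup J$. Let $S$ be the complete geodesic through $z_0,z_1$ oriented from $z_0$ to $z_1$, with backward endpoint $x_0$ and forward endpoint $x_1$; take $\sigma\in\mathrm{PSL}_2(\mathbb{R})$ with $\sigma S=i\mathbb{R}$, $\sigma x_0=\infty$, $\sigma x_1=0$, and $\tilde B=\sigma^{-1}\{\Re z\geq0\}$. Then $\mathcal{P}_{I,J}=\tilde B\cap\mathcal{F}$ and $d_{I,J}$ is its hyperbolic area (measure $dx\,dy/y^2$). *)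

(* Defs.v *)
(* R : realType; the hyperbolic plane is
   modelled as H = {(x,y) : R * R | 0 < y} (upper half-plane, z = x + i y). *)
From mathcomp Require Import all_boot all_order all_algebra.
From mathcomp Require Import all_classical all_reals all_analysis.
Import Order.TTheory GRing.Theory Num.Theory.
Import numFieldNormedType.Exports.
Local Open Scope classical_set_scope.
Local Open Scope ring_scope.

Set Implicit Arguments.
Unset Strict Implicit.
Unset Printing Implicit Defensive.

Record mat2 (R : Type) := M2 { ma : R; mb : R; mc : R; md : R }.

Section Hyperbolic.
Variable R : realType.

Definition cadd (z w : R * R) : R * R := (z.1 + w.1, z.2 + w.2).
Definition csub (z w : R * R) : R * R := (z.1 - w.1, z.2 - w.2).
Definition cmul (z w : R * R) : R * R :=
  (z.1 * w.1 - z.2 * w.2, z.1 * w.2 + z.2 * w.1).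
Definition cscale (k : R) (z : R * R) : R * R := (k * z.1, k * z.2).
Definition cconj (z : R * R) : R * R := (z.1, - z.2).
Definition cnorm2 (z : R * R) : R := z.1 ^+ 2 + z.2 ^+ 2.
Definition cabs (z : R * R) : R := Num.sqrt (cnorm2 z).
Definition cinv (z : R * R) : R * R := (z.1 / cnorm2 z, - z.2 / cnorm2 z).
Definition cdiv (z w : R * R) : R * R := cmul z (cinv w).

Definition inH (z : R * R) : Prop := 0 < z.2.
Definition Hset : set (R * R) := [set z | inH z].

Definition det (g : mat2 R) : R := ma g * md g - mb g * mc g.
Definition mat_mul (g h : mat2 R) : mat2 R :=
  M2 (ma g * ma h + mb g * mc h) (ma g * mb h + mb g * md h)
     (mc g * ma h + md g * mc h) (mc g * mb h + md g * md h).
(* inverse of a determinant-one matrix *)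
Definition mat_inv (g : mat2 R) : mat2 R := M2 (md g) (- mb g) (- mc g) (ma g).
Definition mat_id : mat2 R := M2 1 0 0 1.
Definition mat_negid : mat2 R := M2 (-1) 0 0 (-1).
Definition mat_dist (g h : mat2 R) : R :=
  Num.max (Num.max `|ma g - ma h| `|mb g - mb h|)
          (Num.max `|mc g - mc h| `|md g - md h|).

(* A discrete subgroup of PSL_2(R), represented by its full preimage in
   SL_2(R) (a subgroup of SL_2(R) containing -I), discrete in the topology of
   SL_2(R) viewed as a subspace of R^4. *)
Definition discrete_subgroup (Gamma : set (mat2 R)) : Prop :=
  [/\ (forall g, Gamma g -> det g = 1),
      Gamma mat_id /\ Gamma mat_negid,
      (forall g h, Gamma g -> Gamma h -> Gamma (mat_mul g h)),
      (forall g, Gamma g -> Gamma (mat_inv g)) &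
      (forall g, Gamma g -> (exists e : R, 0 < e /\
         forall h, Gamma h -> mat_dist g h < e -> h = g))].

Definition mob (g : mat2 R) (z : R * R) : R * R :=
  cdiv (cadd (cscale (ma g) z) (mb g, 0)) (cadd (cscale (mc g) z) (md g, 0)).

(* extended points: the Riemann sphere C u {oo}; None = oo *)
Definition ext := option (R * R).
Definition ideal (e : ext) : Prop :=
  match e with None => True | Some z => z.2 = 0 end.
Definition mob_ext (g : mat2 R) (e : ext) : ext :=
  match e with
  | None => if mc g == 0 then None else Some (ma g / mc g, 0)
  | Some z => if cadd (cscale (mc g) z) (md g, 0) == (0, 0) then None
              else Some (mob g z)
  end.

Definition closureH (A : set (R * R)) : set (R * R) := closure A `&` Hset.
Definition bdry (F : set (R * R)) : set (R * R) := closureH F `\` F.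
(* closure in the Riemann sphere C u {oo} *)
Definition closure_ext (A : set (R * R)) (e : ext) : Prop :=
  match e with
  | Some z => closure A z
  | None => forall M : R, exists z, A z /\ M < `|z.1| + `|z.2|
  end.
Definition endpoint (A : set (R * R)) (e : ext) : Prop :=
  closure_ext A e /\ ~ (exists z, e = Some z /\ A z).
Definition rel_open (S A : set (R * R)) : Prop :=
  exists U : set (R * R), open U /\ A = U `&` S.

(* complete geodesics of H: zero sets in H of a(x^2+y^2) + b x + c with
   b^2 > 4ac (vertical lines and semicircles orthogonal to R) *)
Definition geod_eq (a b c : R) (z : R * R) : R :=
  a * (z.1 ^+ 2 + z.2 ^+ 2) + b * z.1 + c.
Definition is_geodesic (G : set (R * R)) : Prop :=
  exists a b c : R, 4 * a * c < b ^+ 2 /\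
    G = [set z | inH z /\ geod_eq a b c z = 0].
Definition closed_halfplane (h : R * R * R) : set (R * R) :=
  [set z | inH z /\ geod_eq h.1.1 h.1.2 h.2 z <= 0].
Definition geodesic_coeffs (h : R * R * R) : Prop :=
  4 * h.1.1 * h.2 < h.1.2 ^+ 2.

Definition hdist (z w : R * R) : R :=
  ln ((cabs (csub z (cconj w)) + cabs (csub z w)) /
      (cabs (csub z (cconj w)) - cabs (csub z w))).
Definition hseg (z w : R * R) : set (R * R) :=
  [set u | inH u /\ hdist z u + hdist u w = hdist z w].
Definition hconvex (A : set (R * R)) : Prop :=
  forall z w, A z -> A w -> hseg z w `<=` A.

Definition geod_segment (E : set (R * R)) : Prop :=
  [/\ exists G, is_geodesic G /\ E `<=` G,
      connected E &
      exists z w, [/\ E z, E w & z <> w]].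
Definition edge (F E : set (R * R)) : Prop :=
  [/\ geod_segment E, E `<=` bdry F &
      forall E', geod_segment E' -> E' `<=` bdry F -> E `<=` E' -> E' = E].

Definition fundamental_polygon (Gamma : set (mat2 R)) (F : set (R * R)) : Prop :=
  [/\ F `<=` Hset /\ open F, hconvex F,
      (exists hs : seq (R * R * R),
          (forall h, h \in hs -> geodesic_coeffs h) /\
          closureH F = [set z | inH z /\ forall h, h \in hs -> closed_halfplane h z]),
      (forall z, inH z -> (exists2 g, Gamma g & closureH F (mob g z))) &
      (forall z w, closureH F z -> closureH F w -> z <> w ->
         (exists2 g, Gamma g & mob g z = w) -> bdry F z /\ bdry F w)].

Definition boundary_subsegment (F I : set (R * R)) : Prop :=
  [/\ I `<=` bdry F, rel_open (bdry F) I, connected I & I !=set0].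

Definition mu2 := ((@lebesgue_measure R) \x (@lebesgue_measure R))%E.
Definition harea (A : set (R * R)) : \bar R :=
  (\int[mu2]_(z in A) ((z.2 ^-2)%:E))%E.

(* Cayley map to the unit disc centred at p in H (orientation preserving) *)
Definition cayley (p : R * R) (e : ext) : R * R :=
  match e with
  | None => (1, 0)
  | Some z => cdiv (csub z p) (csub z (cconj p))
  end.
Definition rot (t : R) (v : R * R) : R * R :=
  (cos t * v.1 - sin t * v.2, sin t * v.1 + cos t * v.2).
Definition same_dir (u v : R * R) : Prop :=
  exists k : R, 0 < k /\ u = cscale k v.
Definition ccw_open (u w v : R * R) : Prop :=
  exists s T : R, [/\ 0 < s, s < T, T <= 2 * pi,
                      same_dir w (rot s u) & same_dir v (rot T u)].
(* open arc of bdry F running positively (F on the left, i.e. counterclockwise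
   as seen from the interior point p) from e1 to e0 *)
Definition pos_arc (F : set (R * R)) (p : R * R) (e1 e0 : ext) : set (R * R) :=
  [set w | bdry F w /\ ccw_open (cayley p e1) (cayley p (Some w)) (cayley p e0)].

Definition on_pos_imag_axis (e : ext) : Prop :=
  match e with None => True | Some z => z.1 = 0 /\ 0 <= z.2 end.
Definition strictly_above (e f : ext) : Prop :=
  match e, f with
  | None, Some _ => True
  | Some z, Some w => w.2 < z.2
  | _, _ => False
  end.
(* S = complete geodesic through z0, z1, oriented from z0 to z1, has backward
   endpoint x0 and forward endpoint x1: some sigma in PSL_2(R) sends x0 to oo,
   x1 to 0 (hence S onto iR), and z0, z1 onto the closed positive imaginary
   axis with z0 strictly above z1. *)
Definition geod_ends (z0 z1 x0 x1 : ext) : Prop :=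
  [/\ ideal x0, ideal x1 &
      exists sigma, [/\ det sigma = 1,
        mob_ext sigma x0 = None /\ mob_ext sigma x1 = Some (0, 0),
        on_pos_imag_axis (mob_ext sigma z0), on_pos_imag_axis (mob_ext sigma z1)
        & strictly_above (mob_ext sigma z0) (mob_ext sigma z1)]].
Definition Btilde (x0 x1 : ext) : set (R * R) :=
  [set z | inH z /\ exists sigma, [/\ det sigma = 1, mob_ext sigma x0 = None,
        mob_ext sigma x1 = Some (0, 0) & 0 <= (mob sigma z).1]].

End Hyperbolic.

(* Main.v *)
Require Import Defs.
From mathcomp Require Import all_boot all_order all_algebra.
From mathcomp Require Import all_classical all_reals all_analysis.
From mathcomp Require Import ring lra.
Import Order.TTheory GRing.Theory Num.Theory.
Import numFieldNormedType.Exports.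
Local Open Scope classical_set_scope.
Local Open Scope ring_scope.

Set Implicit Arguments.
Unset Strict Implicit.
Section Aux.
Variable R : realType.
Lemma geod_cont (a b c : R) : continuous (geod_eq a b c).
Proof.
move=> z; rewrite /geod_eq.
apply: cvgD; last exact: cvg_cst.
apply: cvgD.
  apply: cvgM; first exact: cvg_cst.
  apply: cvgD; apply: cvgM; (try exact: cvg_fst); exact: cvg_snd.
apply: cvgM; first exact: cvg_cst. exact: cvg_fst.
Qed.


Lemma prod0 {k x : R} : k != 0 -> k * x = 0 -> x = 0.
Proof. by move=> k0 /eqP; rewrite mulf_eq0 (negbTE k0) /= => /eqP. Qed.

Lemma geod_unique (p1 p2 p3 q1 q2 q3 : R) (u w z : R * R) :
  4 * q1 * q3 < q2 ^+ 2 -> u <> w -> 0 < u.2 -> 0 < w.2 ->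
  geod_eq p1 p2 p3 u = 0 -> geod_eq p1 p2 p3 w = 0 ->
  geod_eq q1 q2 q3 u = 0 -> geod_eq q1 q2 q3 w = 0 ->
  geod_eq q1 q2 q3 z = 0 -> geod_eq p1 p2 p3 z = 0.
Proof.
case: u => u1 u2; case: w => w1 w2; case: z => z1 z2 /=.
move=> disc uw u20 w20 pu pw qu qw qz.
set U := u1 ^+ 2 + u2 ^+ 2. set W := w1 ^+ 2 + w2 ^+ 2. set Z := z1 ^+ 2 + z2 ^+ 2.
set n1 := u1 - w1. set n2 := W - U. set n3 := U * w1 - u1 * W.
have r3 k1 k2 k3 : k1 * n2 - k2 * n1 = geod_eq k1 k2 k3 (w1, w2) - geod_eq k1 k2 k3 (u1, u2).
  by rewrite /geod_eq /n1 /n2 /U /W /=; ring.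
have r2 k1 k2 k3 : k3 * n1 - k1 * n3 = u1 * geod_eq k1 k2 k3 (w1, w2) - w1 * geod_eq k1 k2 k3 (u1, u2).
  by rewrite /geod_eq /n1 /n3 /U /W /=; ring.
have r1 k1 k2 k3 : k2 * n3 - k3 * n2 = U * geod_eq k1 k2 k3 (w1, w2) - W * geod_eq k1 k2 k3 (u1, u2).
  by rewrite /geod_eq /n2 /n3 /U /W /=; ring.
have rz1 k1 k2 k3 : n1 * geod_eq k1 k2 k3 (z1, z2) - k1 * (n1 * Z + n2 * z1 + n3)
     = - z1 * (k1 * n2 - k2 * n1) + (k3 * n1 - k1 * n3).
  by rewrite /geod_eq /Z /=; ring.
have rz2 k1 k2 k3 : n2 * geod_eq k1 k2 k3 (z1, z2) - k2 * (n1 * Z + n2 * z1 + n3)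
     = Z * (k1 * n2 - k2 * n1) - (k2 * n3 - k3 * n2).
  by rewrite /geod_eq /Z /=; ring.
have [n10|n10] := eqVneq n1 0.
  have n20 : n2 != 0.
    apply/eqP => n20; apply: uw.
    have e1 : u1 = w1 by apply/eqP; rewrite -subr_eq0 -/n1 n10.
    have e2 : u2 ^+ 2 = w2 ^+ 2.
      by move: n20; rewrite /n2 /W /U e1; lra.
    by rewrite e1; congr (_, _); apply/eqP; rewrite -(eqrXn2 (n := 2)) // ?e2 ?ltW.
  have q20 : q2 != 0.
    apply/eqP => q20.
    have := r3 q1 q2 q3; rewrite qu qw q20 n10 subrr mul0r subr0 => /eqP.
    rewrite mulf_eq0 (negbTE n20) orbF => /eqP q10.
    move: disc; rewrite q10 q20; lra.
  have hz : n1 * Z + n2 * z1 + n3 = 0.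
    have := rz2 q1 q2 q3; rewrite qz (r3 q1 q2 q3) (r1 q1 q2 q3) qu qw ?(mulr0, subr0, subrr, mul0r, add0r, sub0r, addr0).
    move=> H; apply: (prod0 q20); lra.
  have := rz2 p1 p2 p3; rewrite hz (r3 p1 p2 p3) (r1 p1 p2 p3) pu pw ?(mulr0, subr0, subrr, mul0r, add0r, sub0r, addr0).
  by move=> H; apply: (prod0 n20); lra.
have q10 : q1 != 0.
  apply/eqP => q10.
  have := r3 q1 q2 q3; rewrite qu qw q10 subrr mul0r sub0r => /eqP.
  rewrite oppr_eq0 mulf_eq0 (negbTE n10) orbF => /eqP q20.
  have := r2 q1 q2 q3; rewrite qu qw q10 !(mulr0, subrr, mul0r, subr0) => /eqP.
  rewrite mulf_eq0 (negbTE n10) orbF => /eqP q30.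
  move: disc; rewrite q10 q20 q30; lra.
have hz : n1 * Z + n2 * z1 + n3 = 0.
  have := rz1 q1 q2 q3; rewrite qz (r3 q1 q2 q3) (r2 q1 q2 q3) qu qw ?(mulr0, subr0, subrr, mul0r, add0r, sub0r, addr0).
  by move=> H; apply: (prod0 q10); lra.
have := rz1 p1 p2 p3; rewrite hz (r3 p1 p2 p3) (r2 p1 p2 p3) pu pw ?(mulr0, subr0, subrr, mul0r, add0r, sub0r, addr0).
by move=> H; apply: (prod0 n10); lra.
Qed.

Implicit Types (a b c d t : R) (z : R * R).

Definition Nd c d z := (c * z.1 + d) ^+ 2 + (c * z.2) ^+ 2.

Lemma mob_fst (g : mat2 R) z : Nd (mc g) (md g) z != 0 ->
  (mob g z).1 = geod_eq (ma g * mc g) (ma g * md g + mb g * mc g) (mb g * md g) z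
                / Nd (mc g) (md g) z.
Proof.
case: g => a b c d /= N0; rewrite /mob /cdiv /cmul /cinv /cnorm2 /cadd /cscale /geod_eq /=.
rewrite /Nd /= in N0 *. rewrite !addr0. by field.
Qed.

Lemma mob_snd (g : mat2 R) z : Nd (mc g) (md g) z != 0 ->
  (mob g z).2 = det g * z.2 / Nd (mc g) (md g) z.
Proof.
case: g => a b c d /= N0; rewrite /mob /cdiv /cmul /cinv /cnorm2 /cadd /cscale /det /=.
rewrite /Nd /= in N0 *. rewrite !addr0. by field.
Qed.

Definition Dq a c t := a ^+ 2 + c ^+ 2 * t ^+ 2.
Definition P a b c d t : R * R :=
  ((- (a * b) - c * d * t ^+ 2) / Dq a c t, (a * d - b * c) * t / Dq a c t).

Lemma geod_P a b c d t : Dq a c t != 0 ->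
  geod_eq (a * c) (a * d + b * c) (b * d) (P a b c d t) = 0.
Proof. move=> D0; rewrite /geod_eq /P /=; rewrite /Dq in D0 *. by field; rewrite ?exprMn. Qed.

Definition phiA (k : R * R * R) a b c d := k.1.1 * d ^+ 2 - k.1.2 * c * d + k.2 * c ^+ 2.
Definition phiC (k : R * R * R) a b c d := k.1.1 * b ^+ 2 - k.1.2 * a * b + k.2 * a ^+ 2.

Lemma geodk_P (k : R * R * R) a b c d t : a * d - b * c = 1 -> Dq a c t != 0 ->
  geod_eq k.1.1 k.1.2 k.2 (P a b c d t) = (phiA k a b c d * t ^+ 2 + phiC k a b c d) / Dq a c t.
Proof.
move=> det1 D0; rewrite /geod_eq /P /phiA /phiC /=; rewrite /Dq in D0 *.
by field; rewrite ?exprMn.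
Qed.
Definition tau a b c d z := (a * d - b * c) * z.2 / Nd c d z.

Lemma Nd_P a b c d t : Dq a c t != 0 ->
  Nd c d (P a b c d t) = (a * d - b * c) ^+ 2 / Dq a c t.
Proof. move=> D0; rewrite /Nd /P /=; rewrite /Dq in D0 *; by field; rewrite ?exprMn. Qed.

Lemma tau_P a b c d t : a * d - b * c != 0 -> Dq a c t != 0 ->
  tau a b c d (P a b c d t) = t.
Proof.
move=> d0 D0; rewrite /tau Nd_P //; rewrite /P /=; rewrite /Dq in D0 *.
by field; rewrite ?exprMn D0 d0.
Qed.

Lemma P_tau a b c d z : a * d - b * c != 0 -> Nd c d z != 0 ->
  geod_eq (a * c) (a * d + b * c) (b * d) z = 0 -> P a b c d (tau a b c d z) = z.
Proof.
case: z => x y d0 N0 G0.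
set dl := a * d - b * c.
set N := Nd c d (x, y).
set G := geod_eq (a * c) (a * d + b * c) (b * d) (x, y).
set u := a * x + b. set v := c * x + d.
have G0' : G = 0 by exact: G0.
have hN : N = v ^+ 2 + c ^+ 2 * y ^+ 2 by rewrite /N /Nd /v /=; ring.
have hG : G = u * v + a * c * y ^+ 2 by rewrite /G /geod_eq /u /v /=; ring.
have hD : Dq a c (tau a b c d (x, y)) - dl ^+ 2 / N = c * G * (a * N + dl * v) / N ^+ 2.
  rewrite /Dq /tau -/dl -/N /= hG hN /dl /v /u. field.
  by move: N0; rewrite /N /Nd /=.
have hD' : Dq a c (tau a b c d (x, y)) = dl ^+ 2 / N.
  by apply/eqP; rewrite -subr_eq0 hD G0' !(mulr0, mul0r).
have h1 : (- (a * b) - c * d * (tau a b c d (x, y)) ^+ 2) / (dl ^+ 2 / N) - x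
   = G * (- (a * N * v - c ^+ 2 * dl * y ^+ 2) + x * c * (a * N + dl * v)) / (dl ^+ 2 * N).
  rewrite /tau -/dl -/N /= hG hN /dl /v /u. field.
  by move: N0; rewrite /N /Nd /= d0 => ->.
have h2 : dl * (tau a b c d (x, y)) / (dl ^+ 2 / N) = y.
  rewrite /tau -/dl -/N /=. field.
  by rewrite N0 d0.
rewrite /P hD' h2; congr (_, _).
by apply/eqP; rewrite -subr_eq0 h1 G0' !(mulr0, mul0r).
Qed.

Lemma ballE (q z : R * R) (e : R) : ball q e z <-> `|q.1 - z.1| < e /\ `|q.2 - z.2| < e.
Proof. rewrite /ball /=. by []. Qed.
Lemma closure_eps (A : set (R * R)) (z : R * R) :
  (forall e : R, 0 < e -> exists p, A p /\ `|p.1 - z.1| < e /\ `|p.2 - z.2| < e) -> closure A z.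
Proof.
move=> H B /nbhs_ballP [e /= e0 sB].
have [p [Ap [p1 p2]]] := H e e0.
exists p; split => //; apply: sB; apply/ballE; split; by rewrite distrC.
Qed.
Lemma open_ball (A : set (R * R)) (q : R * R) : open A -> A q ->
  exists2 e : R, 0 < e & forall z, `|z.1 - q.1| < e -> `|z.2 - q.2| < e -> A z.
Proof.
move=> oA Aq.
have : nbhs q A by apply: open_nbhs_nbhs.
move=> /nbhs_ballP [e /= e0 sA]; exists e => // z h1 h2; apply: sA; apply/ballE; split; by rewrite distrC.
Qed.

Section Area.
Local Open Scope ereal_scope.
Lemma int_mono (dd : measure_display) (T : measurableType dd) (mu : {measure set T -> \bar R})
  (D1 D2 : set T) (f g : T -> \bar R) :
  (forall x, D1 x -> 0 <= f x) -> (forall x, D2 x -> 0 <= g x) ->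
  (forall x, D1 x -> D2 x /\ f x <= g x) ->
  \int[mu]_(x in D1) f x <= \int[mu]_(x in D2) g x.
Proof.
move=> f0 g0 fg; rewrite !ge0_integralE //.
apply: le_ereal_sup => _ [h hf <-]; exists h => // x.
apply: (le_trans (hf x)); rewrite /patch.
case: ifPn => [/[1!inE] xD1|_].
  by have [xD2 fgx] := fg x xD1; rewrite ifT ?inE.
by case: ifPn => [/[1!inE] /g0|].
Qed.

Lemma harea_pos (A : set (R * R)) (q : R * R) (r : R) : (0 < r)%R -> (r < q.2)%R ->
  (forall z : R * R, (`|z.1 - q.1| < r)%R -> (`|z.2 - q.2| < r)%R -> A z) ->
  0 < harea A.
Proof.
move=> r0 rq sub.
pose B := `](q.1 - r)%R, (q.1 + r)%R[%classic `*` `](q.2 - r)%R, (q.2 + r)%R[%classic.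
pose c := ((q.2 + r) ^- 2)%R.
have c0 : (0 < c)%R by rewrite /c invr_gt0 exprn_gt0 // ; lra.
have H1 : \int[@mu2 R]_(z in B) (cst c%:E) z = ((c * (2 * r)) * (2 * r))%:E.
    rewrite integral_cst; last by apply: measurableX; exact: measurable_itv.
    have HB : (@mu2 R) B = (lebesgue_measure (`](q.1 - r)%R, (q.1 + r)%R[%classic : set R) * lebesgue_measure (`](q.2 - r)%R, (q.2 + r)%R[%classic : set R)) by apply: product_measure1E; exact: measurable_itv.
    apply: (@eq_trans _ _ (c%:E * (lebesgue_measure (`](q.1 - r)%R, (q.1 + r)%R[%classic : set R) * lebesgue_measure (`](q.2 - r)%R, (q.2 + r)%R[%classic : set R)))); first by congr (_ * _); exact: HB.
    rewrite !lebesgue_measure_itv /= !lte_fin ifT; last lra.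
    rewrite ifT; last lra.
    rewrite -!EFinB -!EFinM; congr (_%:E).
    ring.
have H2 : \int[@mu2 R]_(z in B) (cst c%:E) z <= harea A.
  apply: int_mono.
  - by move=> x _; rewrite lee_fin ltW.
  - by move=> x _; rewrite lee_fin invr_ge0 sqr_ge0.
  move=> [x y] [/= Bx By]; move: Bx By; rewrite !in_itv /= => /andP[x1 x2] /andP[y1 y2].
  split.
    apply: sub => /=; rewrite ltr_norml; apply/andP; split; lra.
  rewrite lee_fin /c lef_pV2 ?posrE ?exprn_gt0 //; try lra.
  rewrite ler_pXn2r //; rewrite ?nnegrE; lra.
apply: lt_le_trans H2; rewrite H1 lte_fin; apply: mulr_gt0; last lra.
apply: mulr_gt0 => //; lra.
Qed.
End Area.

Lemma Dq_pos (a b c d t : R) : a * d - b * c = 1 -> 0 < t -> 0 < Dq a c t.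
Proof.
move=> det1 t0; rewrite /Dq.
have [a0|a0] := eqVneq a 0.
  rewrite a0 in det1 *.
  have c0 : c != 0 by apply/eqP => c0; move: det1; rewrite c0; rewrite !(mul0r, mulr0, subr0); lra.
  have c2 : 0 < c ^+ 2 by rewrite exprn_even_gt0.
  have t2 : 0 < t ^+ 2 by rewrite exprn_gt0.
  rewrite expr0n /= add0r; exact: mulr_gt0.
have a2 : 0 < a ^+ 2 by rewrite exprn_even_gt0.
have : 0 <= c ^+ 2 * t ^+ 2 by rewrite mulr_ge0 // sqr_ge0.
lra.
Qed.

Lemma P1_shift_c (a b c d t : R) : a * d - b * c = 1 -> c != 0 -> Dq a c t != 0 ->
  (P a b c d t).1 - (- d / c) = a / (c * Dq a c t).
Proof.
move=> det1 c0 D0.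
have -> : (P a b c d t).1 - (- d / c) = a * (a * d - b * c) / (c * Dq a c t).
  rewrite /P /=; rewrite /Dq in D0 *; by field; rewrite exprMn c0 D0.
by rewrite det1 mulr1.
Qed.

Lemma P2_eq (a b c d t : R) : a * d - b * c = 1 -> (P a b c d t).2 = t / Dq a c t.
Proof. by move=> det1; rewrite /P /= det1 mul1r. Qed.

Lemma approx_top (a b c d e : R) : a * d - b * c = 1 -> c != 0 -> 0 < e ->
  exists L, forall t, L < t ->
    `|(P a b c d t).1 - (- d / c)| < e /\ `|(P a b c d t).2 - 0| < e.
Proof.
move=> det1 c0 e0.
set X := `|c|.
have X0 : 0 < X by rewrite normr_gt0.
have cX : c ^+ 2 = X ^+ 2 by rewrite /X real_normK ?num_real.
exists (1 + `|a| / (e * X ^+ 3) + 1 / (e * X ^+ 2)) => t Lt.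
have ha : `|a| / (e * X ^+ 3) >= 0 by rewrite divr_ge0 // mulr_ge0 // ltW // exprn_gt0.
have hb : 1 / (e * X ^+ 2) >= 0 by rewrite divr_ge0 // mulr_ge0 // ltW // exprn_gt0.
have t1 : 1 < t by lra.
have t0 : 0 < t by lra.
have Dp := Dq_pos det1 t0.
have hD : X ^+ 2 * t <= Dq a c t.
  rewrite /Dq -cX.
  have : c ^+ 2 * t <= c ^+ 2 * t ^+ 2.
    by rewrite ler_wpM2l ?sqr_ge0 // expr2 ler_peMl //; lra.
  have : 0 <= a ^+ 2 by rewrite sqr_ge0.
  lra.
have hA : `|a| < t * (e * X ^+ 3).
  by rewrite -ltr_pdivrMr ?mulr_gt0 ?exprn_gt0 //; lra.
have hB : 1 < t * (e * X ^+ 2).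
  by rewrite -ltr_pdivrMr ?mulr_gt0 ?exprn_gt0 //; lra.
split.
  rewrite (P1_shift_c det1 c0 (lt0r_neq0 Dp)) normrM normfV normrM (gtr0_norm Dp) -/X.
  rewrite ltr_pdivrMr ?mulr_gt0 //.
  have : e * X * (X ^+ 2 * t) <= e * X * Dq a c t by rewrite ler_wpM2l // mulr_ge0 // ltW.
  have hA' : t * (e * X ^+ 3) = e * X * (X ^+ 2 * t) by ring.
  nra.
rewrite subr0 P2_eq // ger0_norm ?divr_ge0 ?ltW //.
rewrite ltr_pdivrMr //.
have hD2 : X ^+ 2 * t ^+ 2 <= Dq a c t.
  rewrite /Dq -cX; have : 0 <= a ^+ 2 by rewrite sqr_ge0. lra.
have h1 : t * 1 < t * (t * (e * X ^+ 2)) by rewrite ltr_pM2l.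
have h2 : e * (X ^+ 2 * t ^+ 2) <= e * Dq a c t by rewrite ler_wpM2l // ltW.
have h3 : e * (X ^+ 2 * t ^+ 2) = t * (t * (e * X ^+ 2)) by ring.
lra.
Qed.

Lemma approx_top0 (a b c d M : R) : a * d - b * c = 1 -> c = 0 ->
  exists L, forall t, L < t -> M < `|(P a b c d t).1| + `|(P a b c d t).2|.
Proof.
move=> det1 c0.
have a0 : a != 0 by apply/eqP => a0; move: det1; rewrite a0 c0; rewrite !(mul0r, mulr0, subr0); lra.
have a2 : 0 < a ^+ 2 by rewrite exprn_even_gt0.
exists (`|M| * a ^+ 2 + 1) => t Lt.
have hM : 0 <= `|M| * a ^+ 2 by rewrite mulr_ge0 // ltW.
have t0 : 0 < t by lra.
have hP1 := normr_ge0 (P a b c d t).1.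
have hMn := ler_norm M.
suff : `|M| < `|(P a b c d t).2| by lra.
rewrite P2_eq // /Dq c0 expr0n /= mul0r addr0 (ger0_norm (x := t / a ^+ 2)) ?divr_ge0 ?ltW //.
by rewrite ltr_pdivlMr //; lra.
Qed.

Lemma P1_shift_a (a b c d t : R) : a * d - b * c = 1 -> a != 0 -> Dq a c t != 0 ->
  (P a b c d t).1 - (- b / a) = - (c * t ^+ 2) / (a * Dq a c t).
Proof.
move=> det1 a0 D0.
have -> : (P a b c d t).1 - (- b / a) = - (c * t ^+ 2) * (a * d - b * c) / (a * Dq a c t).
  rewrite /P /=; rewrite /Dq in D0 *; by field; rewrite exprMn a0 D0.
by rewrite det1 mulr1.
Qed.

Lemma approx_bot (a b c d e : R) : a * d - b * c = 1 -> a != 0 -> 0 < e ->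
  exists2 eta, 0 < eta & forall t, 0 < t -> t < eta ->
    `|(P a b c d t).1 - (- b / a)| < e /\ `|(P a b c d t).2 - 0| < e.
Proof.
move=> det1 a0 e0.
set Y := `|a|.
have Y0 : 0 < Y by rewrite normr_gt0.
have aY : a ^+ 2 = Y ^+ 2 by rewrite /Y real_normK ?num_real.
set L := 1 + `|c| / (e * Y ^+ 3) + 1 / (e * Y ^+ 2).
have ha : `|c| / (e * Y ^+ 3) >= 0 by rewrite divr_ge0 // mulr_ge0 // ltW // exprn_gt0.
have hb : 1 / (e * Y ^+ 2) >= 0 by rewrite divr_ge0 // mulr_ge0 // ltW // exprn_gt0.
have L0 : 0 < L by rewrite /L; lra.
exists (1 / L); first by rewrite divr_gt0.
move=> t t0 tL.
have tL' : t * L < 1 by rewrite -ltr_pdivlMr.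
have ht1 : t < 1.
  have : t * L = t + t * (`|c| / (e * Y ^+ 3)) + t * (1 / (e * Y ^+ 2)) by rewrite /L; ring.
  have : 0 <= t * (`|c| / (e * Y ^+ 3)) by rewrite mulr_ge0 // ltW.
  have : 0 <= t * (1 / (e * Y ^+ 2)) by rewrite mulr_ge0 // ltW.
  lra.
have hc : t * (`|c| / (e * Y ^+ 3)) < 1.
  have : t * L = t + t * (`|c| / (e * Y ^+ 3)) + t * (1 / (e * Y ^+ 2)) by rewrite /L; ring.
  have : 0 <= t * (1 / (e * Y ^+ 2)) by rewrite mulr_ge0 // ltW.
  lra.
have hd : t * (1 / (e * Y ^+ 2)) < 1.
  have : t * L = t + t * (`|c| / (e * Y ^+ 3)) + t * (1 / (e * Y ^+ 2)) by rewrite /L; ring.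
  have : 0 <= t * (`|c| / (e * Y ^+ 3)) by rewrite mulr_ge0 // ltW.
  lra.
have eY3 : 0 < e * Y ^+ 3 by rewrite mulr_gt0 // exprn_gt0.
have eY2 : 0 < e * Y ^+ 2 by rewrite mulr_gt0 // exprn_gt0.
have hc' : `|c| * t < e * Y ^+ 3.
  by move: hc; rewrite mulrA [t * _]mulrC ltr_pdivrMr // mul1r.
have hd' : t < e * Y ^+ 2.
  by move: hd; rewrite mulrA mulr1 ltr_pdivrMr // mul1r.
have Dp := Dq_pos det1 t0.
have hD : Y ^+ 2 <= Dq a c t by rewrite /Dq -aY; have := sqr_ge0 c; have := sqr_ge0 t; nra.
split.
  rewrite (P1_shift_a det1 a0 (lt0r_neq0 Dp)) normrM normfV normrM (gtr0_norm Dp) -/Y.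
  rewrite normrN normrM (ger0_norm (sqr_ge0 t)).
  rewrite ltr_pdivrMr ?mulr_gt0 //.
  have h1 : e * Y * Y ^+ 2 <= e * Y * Dq a c t by rewrite ler_wpM2l // mulr_ge0 // ltW.
  have h2 : e * Y * Y ^+ 2 = e * Y ^+ 3 by ring.
  have h3 : `|c| * t ^+ 2 <= `|c| * t by rewrite ler_wpM2l // expr2 ger_pMr //; lra.
  lra.
rewrite subr0 P2_eq // ger0_norm ?divr_ge0 ?ltW //.
rewrite ltr_pdivrMr //.
have : e * Y ^+ 2 <= e * Dq a c t by rewrite ler_wpM2l // ltW.
lra.
Qed.

Lemma approx_bot0 (a b c d M : R) : a * d - b * c = 1 -> a = 0 ->
  exists2 eta, 0 < eta & forall t, 0 < t -> t < eta ->
    M < `|(P a b c d t).1| + `|(P a b c d t).2|.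
Proof.
move=> det1 a0.
have c0 : c != 0 by apply/eqP => c0; move: det1; rewrite a0 c0; rewrite !(mul0r, mulr0, subr0); lra.
have c2 : 0 < c ^+ 2 by rewrite exprn_even_gt0.
have M1 : 0 < `|M| + 1 by have := normr_ge0 M; lra.
exists (1 / (c ^+ 2 * (`|M| + 1))); first by rewrite divr_gt0 // mulr_gt0.
move=> t t0 tL.
have h : c ^+ 2 * (`|M| + 1) * t < 1.
  have K0 : 0 < c ^+ 2 * (`|M| + 1) by rewrite mulr_gt0.
  by move: tL; rewrite (ltr_pdivlMr _ _ K0) mulrC.
have ct : 0 < c ^+ 2 * t by rewrite mulr_gt0.
have hP1 := normr_ge0 (P a b c d t).1.
have hMn := ler_norm M.
suff : `|M| + 1 < `|(P a b c d t).2| by lra.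
rewrite P2_eq // /Dq a0 expr0n /= add0r.
have -> : t / (c ^+ 2 * t ^+ 2) = 1 / (c ^+ 2 * t).
  by field; rewrite (lt0r_neq0 t0) c0.
rewrite (ger0_norm (x := 1 / (c ^+ 2 * t))) ?divr_ge0 ?ltW //.
rewrite (ltr_pdivlMr _ _ ct).
by have -> : (`|M| + 1) * (c ^+ 2 * t) = c ^+ 2 * (`|M| + 1) * t by ring.
Qed.

Lemma phi_seg (A C t1 t t0 : R) : 0 <= t1 -> t1 <= t -> t <= t0 ->
  A * t1 ^+ 2 + C <= 0 -> A * t0 ^+ 2 + C <= 0 -> A * t ^+ 2 + C <= 0.
Proof.
move=> h0 h1 h2 e1 e2.
have s1 : t1 ^+ 2 <= t ^+ 2 by rewrite ler_pXn2r // ?nnegrE //; lra.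
have s2 : t ^+ 2 <= t0 ^+ 2 by rewrite ler_pXn2r // ?nnegrE //; lra.
have [A0|A0] := lerP A 0.
  have : A * t ^+ 2 <= A * t1 ^+ 2 by rewrite ler_wnM2l.
  lra.
have : A * t ^+ 2 <= A * t0 ^+ 2 by rewrite ler_wpM2l // ltW.
lra.
Qed.

Lemma phi_ray (A C t1 t : R) : 0 <= t1 -> t1 <= t -> A <= 0 ->
  A * t1 ^+ 2 + C <= 0 -> A * t ^+ 2 + C <= 0.
Proof.
move=> h0 h1 A0 e1.
have s1 : t1 ^+ 2 <= t ^+ 2 by rewrite ler_pXn2r // ?nnegrE //; lra.
have : A * t ^+ 2 <= A * t1 ^+ 2 by rewrite ler_wnM2l.
lra.
Qed.

Lemma sqr_sum_eq0 (x y : R) : x ^+ 2 + y ^+ 2 = 0 -> x = 0 /\ y = 0.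
Proof.
move=> /eqP; rewrite paddr_eq0 ?sqr_ge0 // !sqrf_eq0 => /andP[/eqP -> /eqP ->]//.
Qed.

Lemma Nd_pos (a b c d : R) (z : R * R) : a * d - b * c = 1 -> 0 < z.2 -> 0 < Nd c d z.
Proof.
move=> det1 z0; rewrite /Nd.
have h1 := sqr_ge0 (c * z.1 + d); have h2 := sqr_ge0 (c * z.2).
rewrite lt_neqAle addr_ge0 // andbT eq_sym; apply/eqP => /sqr_sum_eq0 [e1 e2].
have c0 : c = 0.
  by move/eqP: e2; rewrite mulf_eq0 (gt_eqF z0) orbF => /eqP.
move: e1 det1; rewrite c0 mul0r add0r => ->; rewrite !(mulr0, mul0r, subr0); lra.
Qed.

Lemma mobext_None (g : mat2 R) (e : ext R) : mob_ext g e = None ->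
  (e = None /\ mc g = 0) \/
  (exists z, e = Some z /\ mc g * z.1 + md g = 0 /\ mc g * z.2 = 0).
Proof.
case: g => a b c d; case: e => [z|] /=.
  case: ifP => // /eqP; rewrite /cadd /cscale /= => -[e1 e2] _; right; exists z.
  split => //; split => //; by rewrite -[RHS]e2 addr0.
by case: ifP => // /eqP c0 _; left.
Qed.

Lemma mobext_Some (g : mat2 R) (e : ext R) w : mob_ext g e = Some w ->
  (e = None /\ mc g != 0 /\ w = (ma g / mc g, 0)) \/
  (exists z, e = Some z /\ Nd (mc g) (md g) z != 0 /\ w = mob g z).
Proof.
case: g => a b c d; case: e => [z|] /=.
  case: ifP => // /negbT H [<-]; right; exists z; split => //; split => //.
  apply/eqP; rewrite /Nd /= => /sqr_sum_eq0 [e1 e2]; move/negP: H; apply.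
  by rewrite /Defs.cadd /Defs.cscale /= xpair_eqE e1 addr0 e2 eqxx.
by case: ifP => // /negbT c0 [<-]; left.
Qed.

Lemma closure_geod (S : set (R * R)) (k1 k2 k3 : R) z :
  (forall u, S u -> geod_eq k1 k2 k3 u <= 0) -> closure S z -> geod_eq k1 k2 k3 z <= 0.
Proof.
move=> H.
have cl : closed (geod_eq k1 k2 k3 @^-1` [set x : R | x <= 0]).
  by move: (geod_cont (a:=k1) (b:=k2) (c:=k3)) => /continuous_closedP; apply; exact: closed_le.
rewrite closure_id in cl => Sz.
suff : (geod_eq k1 k2 k3 @^-1` [set x : R | x <= 0]) z by [].
by rewrite cl; apply: (closureS _ Sz) => u /H.
Qed.

Lemma unb_A (S : set (R * R)) (k1 k2 k3 : R) :
  (forall M, exists u, S u /\ M < `|u.1| + `|u.2|) ->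
  (forall u, S u -> geod_eq k1 k2 k3 u <= 0) -> k1 <= 0.
Proof.
move=> unb H; rewrite leNgt; apply/negP => k0.
set K := `|k2| + `|k3| + 1.
have K0 : 0 < K by rewrite /K; have := normr_ge0 k2; have := normr_ge0 k3; lra.
have [u [Su Mu]] := unb (2 * K / k1 + 1).
have := H u Su; rewrite /geod_eq.
set X := `|u.1|; set Y := `|u.2|.
have X2 : u.1 ^+ 2 = X ^+ 2 by rewrite /X real_normK ?num_real.
have Y2 : u.2 ^+ 2 = Y ^+ 2 by rewrite /Y real_normK ?num_real.
have X0 : 0 <= X := normr_ge0 _. have Y0 : 0 <= Y := normr_ge0 _.
set r := X + Y.
have KK : 0 <= 2 * K / k1 by rewrite divr_ge0 // ?mulr_ge0 // ltW.
have Mu' : 2 * K / k1 + 1 < r by exact: Mu.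
have r1 : 1 <= r by lra.
have rK : 2 * K <= k1 * r.
  have : 2 * K / k1 <= r by lra.
  by rewrite ler_pdivrMr // [k1 * r]mulrC mulrC.
have sq : r ^+ 2 <= 2 * (X ^+ 2 + Y ^+ 2).
  have h := sqr_ge0 (X - Y); rewrite /r; nra.
have b2 : - (`|k2| * r) <= k2 * u.1.
  have : `|k2 * u.1| <= `|k2| * r by rewrite normrM ler_wpM2l // /r /X /Y; have := normr_ge0 u.2; lra.
  have := ler_norm (k2 * u.1); rewrite -normrN; have := ler_norm (- (k2 * u.1)).
  rewrite normrN; lra.
have b3 : - `|k3| <= k3 by have := ler_norm (- k3); rewrite normrN; lra.
have e1 : k1 * r ^+ 2 <= 2 * (k1 * (u.1 ^+ 2 + u.2 ^+ 2)).
  by rewrite X2 Y2; have := ler_wpM2l (ltW k0) sq; lra.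
have e2 : 2 * K * r <= k1 * r ^+ 2.
  by rewrite expr2 mulrA; apply: ler_wpM2r; lra.
have e3 : K <= K * r by rewrite ler_peMr //; lra.
rewrite /K in e2 e3.
have := normr_ge0 k2; have := normr_ge0 k3.
nra.
Qed.

Lemma pos_near (A B C e : R) (q : R * R) : 0 < e -> 0 < q.2 -> 4 * A * C < B ^+ 2 ->
  geod_eq A B C q = 0 ->
  exists q' : R * R, [/\ `|q'.1 - q.1| < e, `|q'.2 - q.2| < e & 0 < geod_eq A B C q'].
Proof.
move=> e0 q0 disc G0.
set g1 := 2 * A * q.1 + B. set g2 := 2 * A * q.2.
set s := g1 ^+ 2 + g2 ^+ 2.
have s0 : 0 < s.
  rewrite /s lt_neqAle addr_ge0 ?sqr_ge0 // andbT eq_sym; apply/eqP => /sqr_sum_eq0 [e1 e2].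
  have A0 : A = 0.
    by move/eqP: e2; rewrite /g2 !mulf_eq0 (gt_eqF q0) orbF pnatr_eq0 /= => /eqP.
  move: e1 disc; rewrite /g1 A0 !(mulr0, mul0r, add0r) => ->; rewrite expr0n /=; lra.
set K := 2 * (`|g1| + `|g2| + 1) / e + 2 * (`|A| + 1).
have K1 : 0 <= 2 * (`|g1| + `|g2| + 1) / e.
  by rewrite divr_ge0 ?ltW // mulr_ge0 //; have := normr_ge0 g1; have := normr_ge0 g2; lra.
have K0 : 0 < K by rewrite /K; have := normr_ge0 A; lra.
set t := 1 / K.
have t0 : 0 < t by rewrite divr_gt0.
have tK : t * K = 1 by rewrite /t mulrC mulrA mulr1 divff // gt_eqF.
have ht1 : t * (2 * (`|g1| + `|g2| + 1) / e) <= 1.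
  have : t * K = t * (2 * (`|g1| + `|g2| + 1) / e) + t * (2 * (`|A| + 1)) by rewrite /K; ring.
  have : 0 <= t * (2 * (`|A| + 1)) by rewrite mulr_ge0 ?(ltW t0) //; have := normr_ge0 A; lra.
  lra.
have ht2 : t * (2 * (`|A| + 1)) <= 1.
  have : t * K = t * (2 * (`|g1| + `|g2| + 1) / e) + t * (2 * (`|A| + 1)) by rewrite /K; ring.
  have : 0 <= t * (2 * (`|g1| + `|g2| + 1) / e) by rewrite mulr_ge0 // ltW.
  lra.
have hg : t * (`|g1| + `|g2| + 1) < e.
  have : t * (2 * (`|g1| + `|g2| + 1) / e) = 2 * (t * (`|g1| + `|g2| + 1)) / e by ring.
  move=> h; move: ht1; rewrite h ler_pdivrMr // mul1r.
  have : 0 < t * (`|g1| + `|g2| + 1).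
    by rewrite mulr_gt0 //; have := normr_ge0 g1; have := normr_ge0 g2; lra.
  lra.
have hA : `|A * t| < 1.
  rewrite normrM (gtr0_norm t0).
  have : 0 <= t * `|A| by rewrite mulr_ge0 ?(ltW t0).
  lra.
exists (q.1 + t * g1, q.2 + t * g2); split => /=.
- rewrite addrC addKr normrM (gtr0_norm t0).
  have := normr_ge0 g2; have : 0 <= t * `|g2| by rewrite mulr_ge0 ?(ltW t0).
  lra.
- rewrite addrC addKr normrM (gtr0_norm t0).
  have := normr_ge0 g1; have : 0 <= t * `|g1| by rewrite mulr_ge0 ?(ltW t0).
  lra.
have -> : geod_eq A B C (q.1 + t * g1, q.2 + t * g2) =
    geod_eq A B C q + t * s * (1 + A * t).
  by rewrite /geod_eq /s /g1 /g2 /=; ring.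
rewrite G0 add0r; apply: mulr_gt0; first exact: mulr_gt0.
have := ler_norm (- (A * t)); rewrite normrN; lra.
Qed.
Lemma sq_cont (t : R) : {for t, continuous (fun x : R => x ^+ 2)}.
Proof.
have -> : (fun x : R => x ^+ 2) = (fun x => x * x) by apply: funext => x; rewrite expr2.
by apply: cvgM; exact: cvg_id.
Qed.

Lemma num_cont (k1 k2 t : R) : (k1 - k2 * x ^+ 2) @[x --> t] --> k1 - k2 * t ^+ 2.
Proof.
apply: cvgB; first exact: cvg_cst.
apply: cvgM; first exact: cvg_cst. exact: sq_cont.
Qed.

Lemma lin_cont (k1 t : R) : (k1 * x) @[x --> t] --> k1 * t.
Proof. apply: cvgM; first exact: cvg_cst. exact: cvg_id. Qed.

Lemma Dq_cont (a c : R) : continuous (Dq a c).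
Proof.
move=> t; rewrite /Dq; apply: cvgD; first exact: cvg_cst.
apply: cvgM; first exact: cvg_cst. exact: sq_cont.
Qed.

Lemma P_cont (a b c d t : R) : Dq a c t != 0 -> P a b c d x @[x --> t] --> P a b c d t.
Proof.
move=> D0.
have cV : {for t, continuous (fun x => (Dq a c x)^-1)} by apply: continuousV => //; exact: Dq_cont.
pose f1 := fun x => (- (a * b) - c * d * x ^+ 2) / Dq a c x.
pose f2 := fun x => (a * d - b * c) * x / Dq a c x.
have c1 : f1 x @[x --> t] --> f1 t.
  exact: (cvgM (num_cont (k1 := - (a * b)) (k2 := c * d) (t := t)) cV).
have c2 : f2 x @[x --> t] --> f2 t.
  exact: (cvgM (lin_cont (k1 := a * d - b * c) (t := t)) cV).
exact: (@cvg_pair R R R (nbhs t) (nbhs (f1 t)) (nbhs (f2 t)) _ _ _ f1 f2 c1 c2).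
Qed.
Lemma P_cont' (a b c d t : R) : Dq a c t != 0 -> {for t, continuous (P a b c d)}.
Proof. exact: P_cont. Qed.
End Aux.

Unset Implicit Arguments.
Set Strict Implicit.

Theorem lemma5p3 (R : realType) (Gamma : set (mat2 R)) (F I J : set (R * R)) :
  discrete_subgroup Gamma ->
  fundamental_polygon Gamma F ->
  (harea F < +oo)%E ->                      (* finite covolume *)
  boundary_subsegment F I -> boundary_subsegment F J ->
  I `&` J = set0 ->
  (forall (e e' : ext R) (E : set (R * R)),
      endpoint I e -> endpoint J e' -> edge F E ->
      closure_ext E e -> closure_ext E e' -> False) ->
  forall z0 z1 x0 x1 : ext R,
    endpoint I z0 -> endpoint J z1 ->
    (exists2 p, F p & pos_arc F p z1 z0 `&` (I `|` J) = set0) ->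
    geod_ends z0 z1 x0 x1 ->
    (0 < harea (Btilde x0 x1 `&` F))%E.
Proof.
move=> HG [[FH Fopen] Fconv [hs [hsG hsE]] Fcov Feq] Harea HI HJ IJ Hedge
  z0 z1 x0 x1 Hz0 Hz1 Parc [Hx0 Hx1 [sg [det1 [sx0 sx1] on0 on1 above]]].
move: det1 sx0 sx1 on0 on1 above; case: sg => a b c d; rewrite /det /= => det1 sx0 sx1 on0 on1 above.
set sg := M2 a b c d.
have d0 : a * d - b * c != 0 by rewrite det1 oner_neq0.
set hA := a * c. set hB := a * d + b * c. set hC := b * d.
have disc : 4 * hA * hC < hB ^+ 2.
  have : hB ^+ 2 - 4 * hA * hC = (a * d - b * c) ^+ 2 by rewrite /hA /hB /hC; ring.
  rewrite det1 expr1n; lra.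
have NdP z : 0 < z.2 -> 0 < Nd c d z := fun h => Nd_pos det1 h.
have mobF z : 0 < z.2 -> (mob sg z).1 = geod_eq hA hB hC z / Nd c d z.
  by move=> h; rewrite (mob_fst (g := sg)) //= (lt0r_neq0 (NdP z h)).
have [[q [Fq qpos]] | Hneg] := pselect (exists q, F q /\ 0 < geod_eq hA hB hC q).
  have oO : open (F `&` [set z | 0 < geod_eq hA hB hC z]).
    apply: openI => //.
    have : open (geod_eq hA hB hC @^-1` [set x : R | 0 < x]).
      by apply: open_comp; [move=> z _; exact: geod_cont | exact: open_gt].
    by [].
  have [e e0 He] := open_ball oO (conj Fq qpos).
  have q0 : 0 < q.2 := FH q Fq.
  pose r := Num.min e (q.2 / 2).
  have r0 : 0 < r by rewrite /r lt_min e0 /=; lra.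
  have r1 : r <= e by rewrite /r ge_min lexx.
  have r2 : r <= q.2 / 2 by rewrite /r ge_min lexx orbT.
  apply: (harea_pos (q := q) (r := r)) => //; first lra.
  move=> z h1 h2.
  have [Fz pz] := He z (lt_le_trans h1 r1) (lt_le_trans h2 r1).
  have z0' : 0 < z.2 := FH z Fz.
  split => //; split => //; exists sg; split => //.
  by rewrite mobF // divr_ge0 // ltW // NdP.
exfalso.
have Hle q : F q -> geod_eq hA hB hC q <= 0.
  by move=> Fq; rewrite leNgt; apply/negP => h; apply: Hneg; exists q.
have Hlt q : F q -> geod_eq hA hB hC q < 0.
  move=> Fq; rewrite lt_neqAle Hle // andbT; apply/eqP => G0.
  have [e e0 He] := open_ball Fopen Fq.
  have [q' [h1 h2 pos]] := pos_near e0 (FH q Fq) disc G0.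
  by have := Hle q' (He q' h1 h2); lra.
have clH z : closureH F z <->
    0 < z.2 /\ (forall k, k \in hs -> geod_eq k.1.1 k.1.2 k.2 z <= 0).
  rewrite hsE; split => [[zH Hk]|[zH Hk]]; split => // k kh; first by case: (Hk k kh).
  by split => //; apply: Hk.
have bdS S : boundary_subsegment F S -> forall z, S z -> closureH F z.
  by move=> [sub _ _ _] z /sub [].
have clS S : boundary_subsegment F S -> forall z, closure S z ->
    forall k, k \in hs -> geod_eq k.1.1 k.1.2 k.2 z <= 0.
  move=> HS z Sz k kh; apply: (closure_geod _ Sz) => u /(bdS S HS) /clH [_].
  exact.
have unbS S : boundary_subsegment F S -> closure_ext S None ->
    forall k, k \in hs -> k.1.1 <= 0.
  move=> HS Hunb k kh; apply: (unb_A (k2 := k.1.2) (k3 := k.2) Hunb) => u /(bdS S HS) /clH [_].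
  exact.
pose E := [set z | closureH F z /\ geod_eq hA hB hC z = 0].
pose T := [set t : R | 0 < t /\
  forall k, k \in hs -> phiA k a b c d * t ^+ 2 + phiC k a b c d <= 0].
have DqP t : 0 < t -> 0 < Dq a c t := fun h => Dq_pos det1 h.
have PT t : T t -> E (P a b c d t).
  move=> [t0 Hk]; split; last exact: (geod_P b d (lt0r_neq0 (DqP t t0))).
  apply/clH; split; first by rewrite P2_eq // divr_gt0 // DqP.
  move=> k kh; rewrite (geodk_P k det1 (lt0r_neq0 (DqP t t0))).
  by rewrite ler_pdivrMr ?DqP // mul0r; exact: Hk.
have EP : E = P a b c d @` T.
  apply/seteqP; split; last by move=> _ [t Tt <-]; exact: PT.
  move=> z [Hz G0]; have [z0' Hk] := (clH z).1 Hz.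
  have N0 := lt0r_neq0 (NdP z z0').
  have eP := P_tau d0 N0 G0.
  exists (tau a b c d z) => //.
  have tpos : 0 < tau a b c d z by rewrite /tau det1 mul1r divr_gt0 // NdP.
  split => // k kh.
  have Hkz := Hk k kh; rewrite -eP in Hkz.
  move: Hkz; rewrite (geodk_P k det1 (lt0r_neq0 (DqP _ tpos))).
  by rewrite ler_pdivrMr ?DqP // mul0r.
have Pinj t t' : 0 < t -> 0 < t' -> P a b c d t = P a b c d t' -> t = t'.
  move=> h h' e; rewrite -(tau_P d0 (lt0r_neq0 (DqP t h))) e tau_P //.
  exact: lt0r_neq0 (DqP t' h').
have finish : (exists ta tb, T ta /\ T tb /\ ta <> tb) ->
    closure_ext E z0 -> closure_ext E z1 -> False.
  move=> [ta [tb [Ta [Tb tab]]]] cl0 cl1.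
  apply: (Hedge z0 z1 E Hz0 Hz1 _ cl0 cl1).
  have EbdF : E `<=` bdry F.
    by move=> z [Hz G0]; split => // Fz; have := Hlt z Fz; rewrite G0 ltxx.
  have Eseg : geod_segment E.
    split.
    - exists [set z | inH z /\ geod_eq hA hB hC z = 0]; split.
        by exists hA, hB, hC; split.
      by move=> z [Hz G0]; split => //; have [] := (clH z).1 Hz.
    - rewrite EP; apply: connected_continuous_connected.
        apply/connected_intervalP => x y [xp Hx] [yp Hy] z /andP[xz zy]; split; first lra.
        move=> k kh; exact: (phi_seg (ltW xp) xz zy (Hx k kh) (Hy k kh)).
      apply: continuous_in_subspaceT => t; rewrite inE => -[t0 _].
      exact: P_cont' (lt0r_neq0 (DqP t t0)).
    - exists (P a b c d ta), (P a b c d tb); split; [exact: PT | exact: PT | ].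
      by move=> /(Pinj _ _ Ta.1 Tb.1).
  split => //.
  move=> E' [[G' [[a' [b' [c' [disc' G'E]]]] E'G']] _ _] E'bd EE'.
  apply/seteqP; split; last exact: EE'.
  move=> z E'z; have [zcl _] := E'bd z E'z; split => //.
  have G'z := E'G' z E'z; rewrite G'E in G'z; have [zH g'z] := G'z.
  have [[uH Gu] [wH Gw]] := (PT ta Ta, PT tb Tb).
  have := E'G' _ (EE' _ (PT ta Ta)); rewrite G'E => -[_ G'u].
  have := E'G' _ (EE' _ (PT tb Tb)); rewrite G'E => -[_ G'w].
  have [uH' _] := (clH _).1 uH; have [wH' _] := (clH _).1 wH.
  apply: (geod_unique disc' _ uH' wH' Gu Gw G'u G'w g'z).
  by move=> /(Pinj _ _ Ta.1 Tb.1).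
move: above on0 on1.
case e1: (mob_ext sg z1) => [w1|]; last by case: (mob_ext sg z0).
move=> above on0 [w11 t1ge].
set t1 := w1.2 in t1ge above.
have low : (forall k, k \in hs -> phiA k a b c d * t1 ^+ 2 + phiC k a b c d <= 0) /\
   (0 < t1 -> closure_ext E z1) /\
   (t1 = 0 -> (forall eta, 0 < eta -> exists2 t, T t & t < eta) -> closure_ext E z1).
  have [[z1N [cn0 w1E]] | [z [z1E [N0 w1E]]]] := mobext_Some e1.
  - have a0 : a = 0.
      move: w11; rewrite w1E /= => /eqP; rewrite mulf_eq0 invr_eq0 (negbTE cn0) orbF.
      by move/eqP.
    have t10 : t1 = 0 by rewrite /t1 w1E.
    have hk k : k \in hs -> k.1.1 <= 0.
      by apply: (unbS J HJ); move: Hz1 => [+ _]; rewrite z1N.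
    split; [| split].
    + move=> k kh; rewrite t10 expr0n /= mulr0 add0r /phiC a0.
      have := hk k kh; have := sqr_ge0 b; rewrite !(mulr0, mul0r, expr0n) /=; nra.
    + by rewrite t10 ltxx.
    + move=> _ small; rewrite z1N => M.
      have [eta eta0 Heta] := approx_bot0 M det1 a0.
      have [t Tt teta] := small eta eta0.
      by exists (P a b c d t); split; [exact: PT | exact: Heta (Tt.1) teta].
  - have Nz : 0 < Nd c d z by rewrite lt_neqAle eq_sym N0 /Nd addr_ge0 ?sqr_ge0.
    have G0 : geod_eq hA hB hC z = 0.
      move: w11; rewrite w1E (mob_fst (g := sg)) //= => /eqP.
      by rewrite mulf_eq0 invr_eq0 (negbTE N0) orbF => /eqP.
    have t1E : t1 = z.2 / Nd c d z by rewrite /t1 w1E (mob_snd (g := sg)) // /det /= det1 mul1r.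
    have z2E : z.2 = t1 * Nd c d z by rewrite t1E divfK.
    have clz : closure J z by move: Hz1 => [+ _]; rewrite z1E.
    have hkz k : k \in hs -> geod_eq k.1.1 k.1.2 k.2 z <= 0 := clS J HJ z clz k.
    have [t1p | t10] : 0 < t1 \/ t1 = 0 by move: t1ge; rewrite le_eqVlt => /predU1P[<-|]; [right|left].
    + have z2p : 0 < z.2 by rewrite z2E mulr_gt0.
      have Ez : E z by split => //; apply/clH.
      have tz : tau a b c d z = t1 by rewrite /tau det1 mul1r -t1E.
      split; [| split].
      * move=> k kh; have Hkz := hkz k kh.
        rewrite -(P_tau d0 N0 G0) tz (geodk_P k det1 (lt0r_neq0 (DqP _ t1p))) in Hkz.
        by move: Hkz; rewrite ler_pdivrMr ?DqP // mul0r.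
      * by move=> _; rewrite z1E; apply: subset_closure.
      * by move=> h; move: t1p; rewrite h ltxx.
    + have z20 : z.2 = 0 by rewrite z2E t10 mul0r.
      have v0 : c * z.1 + d != 0.
        apply/eqP => v0; move: N0; rewrite /Nd v0 z20 mulr0 expr0n /= addr0 eqxx.
        by [].
      have u0 : a * z.1 + b = 0.
        have : geod_eq hA hB hC z = (a * z.1 + b) * (c * z.1 + d).
          by rewrite /geod_eq /hA /hB /hC z20; ring.
        rewrite G0 => /esym/eqP; rewrite mulf_eq0 (negbTE v0) orbF => /eqP.
        by [].
      have a0 : a != 0.
        apply/eqP => a0; move: u0 det1; rewrite a0 mul0r add0r => ->.
        by rewrite !(mulr0, mul0r, subr0); lra.
      have zE : z = (- b / a, 0).
        move: z20 u0; case: z {clz hkz N0 Nz G0 t1E z2E z1E v0 w1E} => x y /= -> u0.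
        have hb : b = - (a * x) by apply/eqP; rewrite -addr_eq0 addrC u0.
        by congr (_, _); rewrite hb; field.
      have phiCk k : phiC k a b c d = a ^+ 2 * geod_eq k.1.1 k.1.2 k.2 z.
        rewrite /phiC /geod_eq z20.
        have -> : b = - (a * z.1) by apply/eqP; rewrite -addr_eq0 addrC u0.
        by ring.
      split; [| split].
      * move=> k kh; rewrite t10 expr0n /= mulr0 add0r phiCk.
        by have := hkz k kh; have := sqr_ge0 a; nra.
      * by rewrite t10 ltxx.
      * move=> _ small; rewrite z1E /= zE; apply: closure_eps => eps eps0.
        have [eta eta0 Heta] := approx_bot det1 a0 eps0.
        have [t Tt teta] := small eta eta0.
        by exists (P a b c d t); split; [exact: PT | exact: Heta Tt.1 teta].
have [lowphi [cl1p cl10]] := low.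
have cl1 : (t1 = 0 -> forall eta, 0 < eta -> exists2 t, T t & t < eta) -> closure_ext E z1.
  move=> small.
  have [t1p | t10] : 0 < t1 \/ t1 = 0.
    by move: t1ge; rewrite le_eqVlt => /predU1P[<-|]; [right|left].
    exact: cl1p.
  exact: cl10 t10 (small t10).
move: above on0.
case e0: (mob_ext sg z0) => [w0|] /= above on0.
  have [w01 t0ge] := on0.
  set t0 := w0.2 in t0ge above.
  have t0p : 0 < t0 by lra.
  have [[z0N [cn0 w0E]] | [z [z0E [N0 w0E]]]] := mobext_Some e0.
    by move: t0p; rewrite /t0 w0E ltxx.
  have Nz : 0 < Nd c d z by rewrite lt_neqAle eq_sym N0 /Nd addr_ge0 ?sqr_ge0.
  have G0 : geod_eq hA hB hC z = 0.
    move: w01; rewrite w0E (mob_fst (g := sg)) //= => /eqP.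
    by rewrite mulf_eq0 invr_eq0 (negbTE N0) orbF => /eqP.
  have t0E : t0 = z.2 / Nd c d z by rewrite /t0 w0E (mob_snd (g := sg)) // /det /= det1 mul1r.
  have z2E : z.2 = t0 * Nd c d z by rewrite t0E divfK.
  have z2p : 0 < z.2 by rewrite z2E mulr_gt0.
  have clz : closure I z by move: Hz0 => [+ _]; rewrite z0E.
  have hkz k : k \in hs -> geod_eq k.1.1 k.1.2 k.2 z <= 0 := clS I HI z clz k.
  have Ez : E z by split => //; apply/clH.
  have tz : tau a b c d z = t0 by rewrite /tau det1 mul1r -t0E.
  have topphi k : k \in hs -> phiA k a b c d * t0 ^+ 2 + phiC k a b c d <= 0.
    move=> kh; have Hkz := hkz k kh.
    rewrite -(P_tau d0 N0 G0) tz (geodk_P k det1 (lt0r_neq0 (DqP _ t0p))) in Hkz.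
    by move: Hkz; rewrite ler_pdivrMr ?DqP // mul0r.
  have Tin t : t1 < t -> t < t0 -> T t.
    move=> h1 h2; split; first lra.
    by move=> k kh; exact: (phi_seg t1ge (ltW h1) (ltW h2) (lowphi k kh) (topphi k kh)).
  apply: finish.
  - exists (t1 + (t0 - t1) / 3), (t1 + 2 * (t0 - t1) / 3).
    split; first by apply: Tin; lra.
    split; first by apply: Tin; lra.
    lra.
  - by rewrite z0E; apply: subset_closure.
  - apply: cl1 => t10 eta eta0.
    pose m := Num.min eta (t0 - t1).
    have m1 : m <= eta by rewrite /m ge_min lexx.
    have m2 : m <= t0 - t1 by rewrite /m ge_min lexx orbT.
    have m0 : 0 < m by rewrite /m lt_min eta0 /=; lra.
    by exists (t1 + m / 2); [apply: Tin; lra | lra].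
have [topphi cl0] : (forall k, k \in hs -> phiA k a b c d <= 0) /\
    ((forall L, exists2 t, T t & L < t) -> closure_ext E z0).
  have [[z0N c0] | [z [z0E [v0 w0]]]] := mobext_None e0.
  - rewrite /sg /= in c0; split.
    + move=> k kh; rewrite /phiA c0 !(mulr0, mul0r, expr0n) /= subr0 addr0.
      have hk : k.1.1 <= 0 by apply: (unbS I HI) => //; move: Hz0 => [+ _]; rewrite z0N.
      by have := sqr_ge0 d; nra.
    + move=> large; rewrite z0N => M.
      have [L HL] := approx_top0 M det1 c0.
      have [t Tt Lt] := large L.
      by exists (P a b c d t); split; [exact: PT | exact: HL].
  - rewrite /sg /= in v0 w0.
    have c0 : c != 0.
      apply/eqP => c0; move: v0 det1; rewrite c0 mul0r add0r => ->.
      by rewrite !(mulr0, mul0r, subr0); lra.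
    have z20 : z.2 = 0 by move/eqP: w0; rewrite mulf_eq0 (negbTE c0) /= => /eqP.
    have zE : z = (- d / c, 0).
      move: z20 v0; case: z {z0E w0} => x y /= -> v0.
      have hd : d = - (c * x) by apply/eqP; rewrite -addr_eq0 addrC v0.
      by congr (_, _); rewrite hd; field.
    have phiAk k : phiA k a b c d = c ^+ 2 * geod_eq k.1.1 k.1.2 k.2 z.
      rewrite /phiA /geod_eq z20.
      have -> : d = - (c * z.1) by apply/eqP; rewrite -addr_eq0 addrC v0.
      by ring.
    have clz : closure I z by move: Hz0 => [+ _]; rewrite z0E.
    have hkz k : k \in hs -> geod_eq k.1.1 k.1.2 k.2 z <= 0 := clS I HI z clz k.
    split.
    + move=> k kh; rewrite phiAk.
      by have := hkz k kh; have := sqr_ge0 c; nra.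
    + move=> large; rewrite z0E /= zE; apply: closure_eps => eps eps0.
      have [L HL] := approx_top det1 c0 eps0.
      have [t Tt Lt] := large L.
      by exists (P a b c d t); split; [exact: PT | exact: HL].
have Tin t : t1 < t -> T t.
  move=> h1; split; first lra.
  by move=> k kh; exact: (phi_ray t1ge (ltW h1) (topphi k kh) (lowphi k kh)).
apply: finish.
- exists (t1 + 1), (t1 + 2).
  split; first by apply: Tin; lra.
  split; first by apply: Tin; lra.
  lra.
- apply: cl0 => L; exists (`|L| + t1 + 1); first by apply: Tin; have := normr_ge0 L; lra.
  by have := ler_norm L; lra.
- apply: cl1 => t10 eta eta0.
  by exists (eta / 2); [apply: Tin; lra | lra].
Qed.
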